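(* Let $c \in (0,1/2]$, $t_1 \in [0,1-2c]$, $t_2 \in [t_1+c,1-c]$, and let $p,q \in (0,1)$ with $p \neq q$. Let $F$, $\mu_p$, $\mu_q$, $\Lambda_{p,q}$ and $\gamma_r$ be as described in the context. Then for every $r \in \Lambda_{p,q}$, \[ \int_{F \times F} |x-y| \, d\gamma_r(x,y) \;=\; \frac{t_2-t_1}{1-c}\, \frac{c(p-q)^2+(1-c)(p+q-2r)}{(1-c)+c(p+q-2r)}. \]
   Context: Let $S_1(x)=cx+t_1$ and $S_2(x)=cx+t_2$ on $[0,1]$. Let $F\subseteq[0,1]$ be the unique nonempty compact set with $F=S_1(F)\cup S_2(F)$. For $p\in(0,1)$, $\mu_p$ is the unique Borel probability measure with $\mu_p = p\,\mu_p\circ S_1^{-1} + (1-p)\,\mu_p\circ S_2^{-1}$ (supported on $F$). On $[0,1]^2$ define $S_{i,j}(x,y)=(S_i(x),S_j(y))$ for $i,j\in\{1,2\}$. Let $\Lambda_{p,q}$ be the open interval $\max\{0,p+q-1\}<r<\min\{p,q\}$. For $r\in\Lambda_{p,q}$, $\gamma_r$ is the unique Borel probability measure on $[0,1]^2$ satisfying $\gamma_r = r\,\gamma_r\circ S_{1,1}^{-1} + (p-r)\,\gamma_r\circ S_{1,2}^{-1} + (q-r)\,\gamma_r\circ S_{2,1}^{-1} + (1-p-q+r)\,\gamma_r\circ S_{2,2}^{-1}$; it is supported on $F\times F$ and is a coupling of $\mu_p$ and $\mu_q$ (its first marginal is $\mu_p$, its second is $\mu_q$). *)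

(* Defs.v *)
From HB Require Import structures.
From mathcomp Require Import all_boot all_order all_algebra.
From mathcomp Require Import all_classical all_reals all_analysis.
Set Implicit Arguments. Unset Strict Implicit. Unset Printing Implicit Defensive.
Import Order.TTheory GRing.Theory Num.Theory.
Import numFieldNormedType.Exports.
Local Open Scope classical_set_scope.
Local Open Scope ring_scope.

Definition simil {R : realType} (c t : R) : R -> R := fun x => c * x + t.

Definition simil2 {R : realType} (c ti tj : R) : R * R -> R * R :=
  fun z => (simil c ti z.1, simil c tj z.2).

Definition coupling_selfsim {R : realType}
  (gamma : set (R * R) -> \bar R) (c t1 t2 p q r : R) : Prop :=
  forall A : set (R * R), measurable A ->
    gamma A =
      (r%:E * gamma (simil2 c t1 t1 @^-1` A)
     + (p - r)%:E * gamma (simil2 c t1 t2 @^-1` A)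
     + (q - r)%:E * gamma (simil2 c t2 t1 @^-1` A)
     + (1 - p - q + r)%:E * gamma (simil2 c t2 t2 @^-1` A))%E.

(* Main.v *)
Require Import Defs.
From HB Require Import structures.
From mathcomp Require Import all_boot all_order all_algebra.
From mathcomp Require Import all_classical all_reals all_analysis.
Import Order.TTheory GRing.Theory Num.Theory.
Import numFieldNormedType.Exports.
Local Open Scope classical_set_scope.
Local Open Scope ring_scope.
From mathcomp Require Import ring lra measurable_realfun.
Section PF.
Context d1 d2 (T1 : measurableType d1) (T2 : measurableType d2) (R : realType).
Variables (mu : {measure set T1 -> \bar R}) (f : T1 -> T2).
Variable (mf : measurable_fun setT f).
Definition pf of measurable_fun setT f := pushforward mu f.
Let pf0 : pf mf set0 = 0%E. Proof. by rewrite /pf /pushforward preimage_set0 measure0. Qed.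
Let pf_ge0 A : (0 <= pf mf A)%E. Proof. exact: measure_ge0. Qed.
Let pf_sa : semi_sigma_additive (pf mf).
Proof.
move=> F mF tF mUF; rewrite /pf /pushforward preimage_bigcup.
apply: measure_semi_sigma_additive.
- by move=> n; rewrite -[X in measurable X]setTI; exact: mf.
- apply/trivIsetP => /= i j _ _ ij; rewrite -preimage_setI.
  by move/trivIsetP : tF => /(_ _ _ _ _ ij) ->//; rewrite preimage_set0.
- by rewrite -preimage_bigcup -[X in measurable X]setTI; exact: mf.
Qed.
HB.instance Definition _ := isMeasure.Build _ _ _ (pf mf) pf0 pf_ge0 pf_sa.
End PF.
Arguments pf {d1 d2 T1 T2 R} mu {f}.

Section Geo.
Variables (R : realType) (c t1 t2 : R) (F : set R).
Hypotheses (c0 : 0 < c) (c1 : c <= 1/2) (ht1 : 0 <= t1) (ht12 : t1 + c <= t2) (ht2 : t2 <= 1 - c).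
Hypotheses (cF : compact F) (nF : F !=set0) (eF : F = simil c t1 @` F `|` simil c t2 @` F).

Ltac slra := move: (c0) (c1) (ht1) (ht12) (ht2); lra.

Lemma t1t2 : t1 <= t2. Proof. move: c0 ht12; lra. Qed.

Lemma F_bnd : exists M, forall x, F x -> `|x| <= M.
Proof.
have [M [_ mrt]] := compact_bounded cF.
exists (`|M| + 1) => x Fx.
by apply: (mrt (`|M| + 1)) => //; rewrite ltr_pwDr// ler_norm.
Qed.

Lemma F_dec y : F y -> exists2 z, F z & y = c * z + t1 \/ y = c * z + t2.
Proof.
rewrite {1}eF => -[] [z Fz <-]; exists z => //; [left|right]; done.
Qed.

Lemma F01 x : F x -> 0 <= x <= 1.
Proof.
have [M hM] := F_bnd.
have ub : has_ubound F by exists M => y Fy; exact: le_trans (ler_norm _) (hM _ Fy).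
have lb : has_lbound F.
  exists (- M) => y Fy; rewrite lerNl; apply: le_trans (ler_norm _) _.
  by rewrite normrN; exact: hM.
move=> Fx; apply/andP; split.
- have : inf F >= c * inf F + t1.
    apply: lb_le_inf => // y /F_dec [z Fz [->|->]].
      by rewrite lerD2r ler_pM2l //; apply: ge_inf.
    apply: lerD; last exact: t1t2.
    by rewrite ler_pM2l //; apply: ge_inf.
  move=> h; have h2 : 0 <= (1 - c) * inf F by move: ht1; lra.
  have h3 : 0 <= inf F by move: h2; rewrite pmulr_rge0 //; move: c1; lra.
  have := ge_inf lb Fx; lra.
- have : sup F <= c * sup F + t2.
    apply: ge_sup => // y /F_dec [z Fz [->|->]].
      apply: lerD; last exact: t1t2.
      by rewrite ler_pM2l //; apply: ub_le_sup.
    by rewrite lerD2r ler_pM2l //; apply: ub_le_sup.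
  move=> h; have h2 : (1 - c) * (sup F - 1) <= 0 by move: ht2; lra.
  have h3 : sup F - 1 <= 0 by move: h2; rewrite pmulr_rle0 //; move: c1; lra.
  have := ub_le_sup ub Fx; lra.
Qed.

Definition A (e : R) : set R := \bigcup_(y in F) ball y e.
Definition U (e : R) : set (R * R) := A e `*` A e.
Definition K : set (R * R) := F `*` F.

Lemma mA e : measurable (A e).
Proof. by apply: open_measurable; apply: bigcup_open => y _; exact: ball_open. Qed.

Lemma mU e : measurable (U e).
Proof. exact: measurableX (mA e) (mA e). Qed.

Lemma cF' : closed F.
Proof. exact: compact_closed. Qed.

Lemma mK : measurable K.
Proof. by apply: measurableX; apply: closed_measurable; exact: cF'. Qed.

Lemma A_mono e e' : e <= e' -> A e `<=` A e'.
Proof. by move=> ee' x [y Fy hy]; exists y => //; rewrite /ball /= in hy *; exact: lt_le_trans ee'. Qed.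

Lemma FA e : 0 < e -> F `<=` A e.
Proof. by move=> e0 x Fx; exists x => //; rewrite /ball /= subrr normr0. Qed.

Lemma simF a y : (a = t1 \/ a = t2) -> F y -> F (c * y + a).
Proof.
move=> [->|->] Fy; rewrite eF; [left|right]; by exists y.
Qed.

Lemma A_scale e a x : (a = t1 \/ a = t2) -> A (e / c) x -> A e (c * x + a).
Proof.
move=> ha [y Fy hy]; exists (c * y + a); first exact: simF.
rewrite /ball /= in hy *.
rewrite opprD addrACA subrr addr0 -mulrBr normrM gtr0_norm //.
by rewrite -ltr_pdivlMl // mulrC.
Qed.

Lemma F_cl x : (forall n : nat, A (n.+1%:R^-1) x) -> F x.
Proof.
move=> h; apply: contrapT => nFx.
have : nbhs x (~` F) by apply: (closed_openC cF'); exact: nFx.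
case/nbhs_ballP => e /= e0 he.
have [y Fy hy] := h (Num.trunc (e^-1)).
apply: (he y) => //.
rewrite /ball /= -normrN opprB in hy *.
apply: (lt_trans hy).
rewrite invf_plt ?posrE //; exact: truncnS_gt.
Qed.


Lemma mS a b : measurable_fun setT (simil2 c a b).
Proof.
apply: measurable_fun_pair.
- apply: measurableT_comp; last exact: measurable_fst.
  by apply: continuous_measurable_fun => x; apply: continuousD; [apply: continuousM; [exact: cvg_cst|exact: cvg_id]| exact: cvg_cst].
- apply: measurableT_comp; last exact: measurable_snd.
  by apply: continuous_measurable_fun => x; apply: continuousD; [apply: continuousM; [exact: cvg_cst|exact: cvg_id]| exact: cvg_cst].
Qed.

Lemma mpre a b (B : set (R * R)) : measurable B -> measurable (simil2 c a b @^-1` B).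
Proof. by move=> mB; rewrite -[X in measurable X]setTI; exact: mS. Qed.


Variables (p q r : R) (gamma : probability (R * R)%type R).
Hypotheses (hp0 : 0 < p) (hp1 : p < 1) (hq0 : 0 < q) (hq1 : q < 1).
Hypotheses (hr0 : Num.max 0 (p + q - 1) < r) (hr1 : r < Num.min p q).
Hypothesis hg : coupling_selfsim gamma c t1 t2 p q r.

Lemma wpos : [/\ 0 < r, 0 < p - r, 0 < q - r & 0 < 1 - p - q + r].
Proof.
move: hr0 hr1; rewrite gt_max lt_min => /andP[h1 h2] /andP[h3 h4].
split; move: h1 h2 h3 h4; lra.
Qed.

Definition P (B : set (R * R)) := fine (gamma B).

Lemma gE B : measurable B -> gamma B = (P B)%:E.
Proof.
move=> mB; rewrite fineK // ge0_fin_numE //.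
by apply: (le_lt_trans (probability_le1 _ mB)); rewrite ltry.
Qed.

Arguments gE [B].
Arguments mpre [a b B].
Notation S11 := (simil2 c t1 t1).
Notation S12 := (simil2 c t1 t2).
Notation S21 := (simil2 c t2 t1).
Notation S22 := (simil2 c t2 t2).

Lemma ssR B : measurable B ->
  P B = r * P (S11 @^-1` B) + (p - r) * P (S12 @^-1` B)
      + (q - r) * P (S21 @^-1` B) + (1 - p - q + r) * P (S22 @^-1` B).
Proof.
move=> mB; have := hg B mB.
rewrite (gE mB) (gE (@mpre t1 t1 _ mB)) (gE (@mpre t1 t2 _ mB)) (gE (@mpre t2 t1 _ mB)) (gE (@mpre t2 t2 _ mB)).
by rewrite -!EFinM -!EFinD; case.
Qed.

Lemma Pmono B B' : measurable B -> measurable B' -> B `<=` B' -> P B <= P B'.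
Proof.
move=> mB mB' BB'; rewrite -lee_fin -!gE //.
by apply: le_measure => //; rewrite inE.
Qed.

Arguments Pmono [B B'].
Arguments ssR [B].

Lemma P_le1 B : measurable B -> P B <= 1.
Proof. by move=> mB; rewrite -lee_fin -gE //; exact: probability_le1. Qed.

Lemma U_scale e a b : (a = t1 \/ a = t2) -> (b = t1 \/ b = t2) ->
  U (e / c) `<=` simil2 c a b @^-1` U e.
Proof.
by move=> ha hb [x y] [/= hx hy]; split; rewrite /simil /=; apply: A_scale.
Qed.

Lemma PU_step e : 0 < e -> P (U (2 * e)) <= P (U e).
Proof.
move=> e0.
have h2e : 2 * e <= e / c.
  rewrite ler_pdivlMr //; move: c1 e0 c0; nra.
have h2 : P (U (2 * e)) <= P (U (e / c)).
  apply: Pmono; [exact: mU|exact: mU|].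
  by move=> z [h1 h3]; split; [exact: A_mono h2e _ h1|exact: A_mono h2e _ h3].
have [w1 w2 w3 w4] := wpos.
have k1 := Pmono (mU (e / c)) (@mpre t1 t1 _ (mU e)) (U_scale e t1 t1 (or_introl erefl) (or_introl erefl)).
have k2 := Pmono (mU (e / c)) (@mpre t1 t2 _ (mU e)) (U_scale e t1 t2 (or_introl erefl) (or_intror erefl)).
have k3 := Pmono (mU (e / c)) (@mpre t2 t1 _ (mU e)) (U_scale e t2 t1 (or_intror erefl) (or_introl erefl)).
have k4 := Pmono (mU (e / c)) (@mpre t2 t2 _ (mU e)) (U_scale e t2 t2 (or_intror erefl) (or_intror erefl)).
rewrite (ssR (mU e)).
have l1 := ler_wpM2l (ltW w1) k1.
have l2 := ler_wpM2l (ltW w2) k2.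
have l3 := ler_wpM2l (ltW w3) k3.
have l4 := ler_wpM2l (ltW w4) k4.
move: h2 l1 l2 l3 l4; lra.
Qed.


Lemma PU_pow e n : 0 < e -> P (U (e * 2 ^+ n)) <= P (U e).
Proof.
move=> e0; elim: n => [|n IH]; first by rewrite expr0 mulr1.
rewrite exprS mulrCA; apply: le_trans IH; apply: PU_step.
by rewrite mulr_gt0 // exprn_gt0.
Qed.

Lemma bigU e : 0 < e -> \bigcup_n U (e * 2 ^+ n) = setT.
Proof.
move=> e0; apply/seteqP; split => // -[x y] _.
have [y0 Fy0] := nF.
pose B := `|y0 - x| + `|y0 - y|.
exists (Num.trunc (B / e)) => //.
set n := Num.trunc (B / e).
have hn : B < e * 2 ^+ n.
  have h1 : B / e < n.+1%:R by exact: truncnS_gt.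
  have h2 : (n.+1%:R : R) <= 2 ^+ n.
    by rewrite -natrX ler_nat; exact: ltn_expl.
  rewrite mulrC -ltr_pdivrMr //; exact: lt_le_trans h1 h2.
have hx : 0 <= `|y0 - x| := normr_ge0 _.
have hy : 0 <= `|y0 - y| := normr_ge0 _.
split; exists y0 => //; rewrite /ball /=; move: hn; rewrite /B; lra.
Qed.

Lemma PU1 e : 0 < e -> P (U e) = 1.
Proof.
move=> e0; apply/le_anti; rewrite P_le1 ?mU //=.
have nd : nondecreasing_seq (fun n => U (e * 2 ^+ n)).
  move=> n m nm; apply/subsetPset => z [h1 h2].
  have hle : e * 2 ^+ n <= e * 2 ^+ m.
    by rewrite ler_pM2l // ler_eXn2l // ltr1n.
  by split; [exact: A_mono hle _ h1|exact: A_mono hle _ h2].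
have mb : measurable (\bigcup_n U (e * 2 ^+ n)) by rewrite bigU.
have hc := @nondecreasing_cvg_mu _ _ _ gamma (fun n => U (e * 2 ^+ n)) (fun n => mU _) mb.
rewrite bigU // in hc.
have hc2 := hc nd.
move: hc2; rewrite [X in _ --> X](_ : _ = 1%E); last exact: probability_setT.
move=> hc2.
have : (1 <= gamma (U e))%E.
  rewrite -(cvg_lim (@ereal_hausdorff R) hc2).
  apply: lime_le; first by apply/cvg_ex; eexists; exact: hc2.
  by apply: nearW => n /=; rewrite (gE (mU _)) (gE (mU e)) lee_fin; exact: PU_pow.
  by move=> h; rewrite (gE (mU e)) lee_fin in h.
exact: mU.
Qed.


Lemma bigW : \bigcap_n U (n.+1%:R^-1) = K.
Proof.
apply/seteqP; split.
- move=> [x y] h; split; apply: F_cl => n; have [] := h n I; done.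
- move=> z [h1 h2] n _; split; exact: FA.
Qed.

Lemma gK1 : gamma K = 1%E.
Proof.
have ni : nonincreasing_seq (fun n => U (n.+1%:R^-1)).
  move=> n m nm; apply/subsetPset => z [h1 h2].
  have hle : (m.+1%:R^-1 : R) <= n.+1%:R^-1.
    by rewrite lef_pV2 ?posrE // ler_nat.
  by split; [exact: A_mono hle _ h1|exact: A_mono hle _ h2].
have mb : measurable (\bigcap_n U (n.+1%:R^-1)) by rewrite bigW; exact: mK.
have fin : (gamma (U (0.+1%:R^-1)) < +oo)%E.
  by rewrite (gE (mU _)) ltry.
have hc := @nonincreasing_cvg_mu _ _ _ gamma (fun n => U (n.+1%:R^-1)) fin (fun n => mU _) mb ni.
rewrite bigW in hc.
have e1 : gamma \o (fun n => U (n.+1%:R^-1)) = cst 1%E.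
  by apply/funext => n /=; rewrite (gE (mU _)) PU1.
rewrite e1 in hc.
have l1 := cvg_lim (@ereal_hausdorff R) hc.
rewrite -l1 //; apply: (cvg_lim (@ereal_hausdorff R)); exact: cvg_cst.
Qed.


Lemma intTK (g : R * R -> \bar R) : measurable_fun setT g -> (forall z, (0 <= g z)%E) ->
  (\int[gamma]_z g z = \int[gamma]_(z in K) g z)%E.
Proof.
move=> mg g0.
rewrite (@ge0_negligible_integral _ _ _ gamma setT (~` K)) //.
- by rewrite setTD setCK.
- exact: measurableC mK.
- by have h := @probability_setC _ _ _ gamma K mK; rewrite gK1 subee // in h; exact: h.
Qed.

Lemma wge0 : [/\ 0 <= r, 0 <= p - r, 0 <= q - r & 0 <= 1 - p - q + r].
Proof. by have [w1 w2 w3 w4] := wpos; split; apply: ltW. Qed.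
Lemma wg1 : 0 <= r. Proof. by case: wge0. Qed.
Lemma wg2 : 0 <= p - r. Proof. by case: wge0. Qed.
Lemma wg3 : 0 <= q - r. Proof. by case: wge0. Qed.
Lemma wg4 : 0 <= 1 - p - q + r. Proof. by case: wge0. Qed.

Definition nu := measure_add
  (measure_add (mscale (NngNum wg1) (pf gamma (mS t1 t1)))
               (mscale (NngNum wg2) (pf gamma (mS t1 t2))))
  (measure_add (mscale (NngNum wg3) (pf gamma (mS t2 t1)))
               (mscale (NngNum wg4) (pf gamma (mS t2 t2)))).

Lemma nuE B : measurable B -> gamma B = nu B.
Proof.
move=> mB; rewrite (hg B mB) /nu !measure_addE /mscale /= /pf /pushforward.
by rewrite /msum !big_ord_recl !big_ord0 /= !adde0 !addeA.
Qed.

Lemma T1 (g : R * R -> \bar R) : measurable_fun setT g -> (forall z, (0 <= g z)%E) ->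
  (\int[gamma]_z g z = r%:E * \int[gamma]_z (g \o S11) z
     + (p - r)%:E * \int[gamma]_z (g \o S12) z
     + (q - r)%:E * \int[gamma]_z (g \o S21) z
     + (1 - p - q + r)%:E * \int[gamma]_z (g \o S22) z)%E.
Proof.
move=> mg g0.
rewrite (eq_measure_integral nu); last by move=> B mB _; exact: nuE.
rewrite /nu !ge0_integral_measure_add //.
rewrite !ge0_integral_mscale //=.
rewrite /pf !ge0_integral_pushforward //= ?preimage_setT ?addeA //; exact: mS.
Qed.


Lemma SK a b z : (a = t1 \/ a = t2) -> (b = t1 \/ b = t2) -> K z -> K (simil2 c a b z).
Proof. by move=> ha hb [h1 h2]; split; apply: simF. Qed.

Lemma KL (h : R * R -> R) : measurable_fun setT h -> (forall z, K z -> 0 <= h z) ->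
  (\int[gamma]_(z in K) (h z)%:E =
     r%:E * \int[gamma]_(z in K) (h (S11 z))%:E
     + (p - r)%:E * \int[gamma]_(z in K) (h (S12 z))%:E
     + (q - r)%:E * \int[gamma]_(z in K) (h (S21 z))%:E
     + (1 - p - q + r)%:E * \int[gamma]_(z in K) (h (S22 z))%:E)%E.
Proof.
move=> mh h0.
pose g := (EFin \o h) \_ K.
have mg : measurable_fun setT g.
  apply/(measurable_restrictT _ mK); apply/measurable_EFinP.
  exact: measurable_funS measurableT _ mh.
have g0 z : (0 <= g z)%E.
  rewrite /g /patch; case: ifP => // /set_mem Kz; rewrite lee_fin; exact: h0.
have hS a b : (a = t1 \/ a = t2) -> (b = t1 \/ b = t2) ->
    (\int[gamma]_z (g \o simil2 c a b) z = \int[gamma]_(z in K) (h (simil2 c a b z))%:E)%E.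
  move=> ha hb; rewrite intTK.
  - apply: eq_integral => z /set_mem Kz.
    by rewrite /g /patch /= mem_set //; exact: SK.
  - exact: measurableT_comp mg (mS a b).
  - by move=> z; exact: g0.
rewrite integral_mkcond -/g (@T1 g mg g0).
rewrite (hS t1 t1) ?(hS t1 t2) ?(hS t2 t1) ?(hS t2 t2) //; try (first [by left|by right]).
Qed.


Lemma Kb z : K z -> [/\ 0 <= z.1, z.1 <= 1, 0 <= z.2 & z.2 <= 1].
Proof. by case=> /F01/andP[? ?] /F01/andP[? ?]. Qed.

Lemma intK (h : R * R -> R) B : measurable_fun setT h ->
  (forall z, K z -> `|h z| <= B) -> gamma.-integrable K (EFin \o h).
Proof.
move=> mh hB; apply: measurable_bounded_integrable.
- exact: mK.
- by apply: (le_lt_trans (probability_le1 _ mK)); rewrite ltry.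
- exact: measurable_funS measurableT _ mh.
- exists B; split; first exact: num_real.
  by move=> M hM z Kz /=; apply: le_trans (hB z Kz) (ltW hM).
Qed.

Lemma RIE (h : R * R -> R) : gamma.-integrable K (EFin \o h) ->
  (\int[gamma]_(z in K) (h z)%:E)%E = (\int[gamma]_(z in K) h z)%:E.
Proof. move=> ih; rewrite /Rintegral fineK //. exact (integrable_fin_num mK ih). Qed.

Lemma maff a b k : measurable_fun setT (fun z : R * R => a * z.1 + b * z.2 + k).
Proof.
apply: (@measurable_funD _ _ _ _ (fun z : R * R => a * z.1 + b * z.2) (cst k)); last exact: measurable_cst.
apply: (@measurable_funD _ _ _ _ (fun z : R * R => a * z.1) (fun z : R * R => b * z.2)).
- apply: (@measurable_funM _ _ _ _ (cst a) fst); [exact: measurable_cst|exact: measurable_fst].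
- apply: (@measurable_funM _ _ _ _ (cst b) snd); [exact: measurable_cst|exact: measurable_snd].
Qed.

Lemma iaff a b k : gamma.-integrable K (EFin \o (fun z : R * R => a * z.1 + b * z.2 + k)).
Proof.
apply: (@intK _ (`|a| + `|b| + `|k|)); first exact: maff.
move=> z /Kb [h1 h2 h3 h4].
apply: (le_trans (ler_normD _ _)); apply: lerD => //.
apply: (le_trans (ler_normD _ _)); rewrite !normrM.
apply: lerD; rewrite -[X in _ <= X]mulr1; apply: ler_wpM2l => //;
  by rewrite ger0_norm.
Qed.

Definition M1 := \int[gamma]_(z in K) z.1.
Definition M2 := \int[gamma]_(z in K) z.2.

Lemma mlin a b : measurable_fun setT (fun z : R * R => a * z.1 + b * z.2).
Proof.
apply: (@measurable_funD _ _ _ _ (fun z : R * R => a * z.1) (fun z : R * R => b * z.2)).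
- apply: (@measurable_funM _ _ _ _ (cst a) fst); [exact: measurable_cst|exact: measurable_fst].
- apply: (@measurable_funM _ _ _ _ (cst b) snd); [exact: measurable_cst|exact: measurable_snd].
Qed.

Lemma ifst : gamma.-integrable K (EFin \o (fun z : R * R => z.1)).
Proof.
apply: (@intK _ 1); first exact: measurable_fst.
by move=> z /Kb [h1 h2 h3 h4]; rewrite ger0_norm.
Qed.

Lemma isnd : gamma.-integrable K (EFin \o (fun z : R * R => z.2)).
Proof.
apply: (@intK _ 1); first exact: measurable_snd.
by move=> z /Kb [h1 h2 h3 h4]; rewrite ger0_norm.
Qed.

Lemma icst k : gamma.-integrable K (EFin \o (fun z : R * R => k)).
Proof.
apply: (@intK _ `|k|); first exact: measurable_cst.
by [].
Qed.

Lemma ilin a b : gamma.-integrable K (EFin \o (fun z : R * R => a * z.1 + b * z.2)).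
Proof.
apply: (@intK _ (`|a| + `|b|)); first exact: mlin.
move=> z /Kb [h1 h2 h3 h4].
apply: (le_trans (ler_normD _ _)); rewrite !normrM.
apply: lerD; rewrite -[X in _ <= X]mulr1; apply: ler_wpM2l => //;
  by rewrite ger0_norm.
Qed.

Lemma fgK : fine (gamma K) = 1.
Proof. by rewrite gK1. Qed.

Lemma RIaff a b k : \int[gamma]_(z in K) (a * z.1 + b * z.2 + k) = a * M1 + b * M2 + k.
Proof.
rewrite RintegralD //; [|exact: mK|exact: ilin|exact: icst].
rewrite RintegralD //; first last.
- apply: (@intK _ `|b|).
    by apply: (@measurable_funM _ _ _ _ (cst b) snd); [exact: measurable_cst|exact: measurable_snd].
  move=> z /Kb [h1 h2 h3 h4]; rewrite normrM -[X in _ <= X]mulr1; apply: ler_wpM2l => //.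
  by rewrite ger0_norm.
- apply: (@intK _ `|a|).
    by apply: (@measurable_funM _ _ _ _ (cst a) fst); [exact: measurable_cst|exact: measurable_fst].
  move=> z /Kb [h1 h2 h3 h4]; rewrite normrM -[X in _ <= X]mulr1; apply: ler_wpM2l => //.
  by rewrite ger0_norm.
- exact: mK.
rewrite RintegralZl //; [|exact: mK|exact: ifst].
rewrite RintegralZl //; [|exact: mK|exact: isnd].
by rewrite Rintegral_cst ?fgK ?mulr1 //; exact: mK.
Qed.


Lemma KLR (h : R * R -> R) B : measurable_fun setT h -> (forall z, K z -> 0 <= h z <= B) ->
  \int[gamma]_(z in K) h z =
     r * \int[gamma]_(z in K) h (S11 z)
     + (p - r) * \int[gamma]_(z in K) h (S12 z)
     + (q - r) * \int[gamma]_(z in K) h (S21 z)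
     + (1 - p - q + r) * \int[gamma]_(z in K) h (S22 z).
Proof.
move=> mh hB.
have h0 z : K z -> 0 <= h z by move=> /hB /andP[].
have ih : gamma.-integrable K (EFin \o h).
  apply: (@intK _ B) => // z /hB /andP[h1 h2]; by rewrite ger0_norm.
have iS a b : (a = t1 \/ a = t2) -> (b = t1 \/ b = t2) ->
    gamma.-integrable K (EFin \o (fun z => h (simil2 c a b z))).
  move=> ha hb; apply: (@intK _ B); first exact: measurableT_comp mh (mS a b).
  move=> z Kz; have /hB /andP[h1 h2] := SK a b z ha hb Kz; by rewrite ger0_norm.
have := KL h mh h0.
rewrite (RIE _ ih) (RIE _ (iS t1 t1 (or_introl erefl) (or_introl erefl))).
rewrite (RIE _ (iS t1 t2 (or_introl erefl) (or_intror erefl))).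
rewrite (RIE _ (iS t2 t1 (or_intror erefl) (or_introl erefl))).
rewrite (RIE _ (iS t2 t2 (or_intror erefl) (or_intror erefl))).
by rewrite -!EFinM -!EFinD; case.
Qed.


Lemma RIs1 a : \int[gamma]_(z in K) simil c a z.1 = c * M1 + a.
Proof.
have := RIaff c 0 a; rewrite mul0r addr0 => <-; apply: eq_Rintegral => z _; by rewrite /simil mul0r addr0.
Qed.

Lemma RIs2 a : \int[gamma]_(z in K) simil c a z.2 = c * M2 + a.
Proof.
have := RIaff 0 c a; rewrite mul0r add0r => <-; apply: eq_Rintegral => z _; by rewrite /simil mul0r add0r.
Qed.

Lemma eqM1 : M1 = r * (c * M1 + t1) + (p - r) * (c * M1 + t1) + (q - r) * (c * M1 + t2)
   + (1 - p - q + r) * (c * M1 + t2).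
Proof.
have b1 : forall z, K z -> 0 <= z.1 <= 1 by move=> z /Kb [? ? ? ?]; apply/andP.
have e := @KLR (fun z => z.1) 1 measurable_fst b1.
rewrite /= !RIs1 in e; exact: e.
Qed.

Lemma eqM2 : M2 = r * (c * M2 + t1) + (p - r) * (c * M2 + t2) + (q - r) * (c * M2 + t1)
   + (1 - p - q + r) * (c * M2 + t2).
Proof.
have b1 : forall z, K z -> 0 <= z.2 <= 1 by move=> z /Kb [? ? ? ?]; apply/andP.
have e := @KLR (fun z => z.2) 1 measurable_snd b1.
rewrite /= !RIs2 in e; exact: e.
Qed.

Definition DD := \int[gamma]_(z in K) `|z.1 - z.2|.

Lemma mDD : measurable_fun setT (fun z : R * R => `|z.1 - z.2|).
Proof.
have -> : (fun z : R * R => `|z.1 - z.2|) = (fun x : R => `|x|) \o (fun z : R * R => 1 * z.1 + (-1) * z.2).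
  by apply/funext => z /=; rewrite mul1r mulN1r.
apply: measurableT_comp; [exact: normr_measurable|exact: (mlin 1 (-1))].
Qed.

Lemma RId a : \int[gamma]_(z in K) `|simil c a z.1 - simil c a z.2| = c * DD.
Proof.
rewrite /DD -RintegralZl; first last.
- apply: (@intK _ 1); first exact: mDD.
  move=> z /Kb [? ? ? ?]; rewrite normr_id ler_norml; apply/andP; split; lra.
- exact: mK.
apply: eq_Rintegral => z _.
by rewrite /simil opprD addrACA subrr addr0 -mulrBr normrM gtr0_norm.
Qed.

Lemma RI12 : \int[gamma]_(z in K) `|simil c t1 z.1 - simil c t2 z.2| = - c * M1 + c * M2 + (t2 - t1).
Proof.
rewrite -RIaff; apply: eq_Rintegral => z /set_mem /Kb [h1 h2 h3 h4].
have k1 : c * z.1 <= c by rewrite ler_piMr // ltW.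
have k2 : 0 <= c * z.2 by rewrite mulr_ge0 // ltW.
rewrite /simil ler0_norm; last by move: ht12; lra.
by rewrite mulNr; lra.
Qed.

Lemma RI21 : \int[gamma]_(z in K) `|simil c t2 z.1 - simil c t1 z.2| = c * M1 - c * M2 + (t2 - t1).
Proof.
rewrite -mulNr -RIaff; apply: eq_Rintegral => z /set_mem /Kb [h1 h2 h3 h4].
have k1 : c * z.2 <= c by rewrite ler_piMr // ltW.
have k2 : 0 <= c * z.1 by rewrite mulr_ge0 // ltW.
rewrite /simil ger0_norm; last by move: ht12; lra.
by rewrite mulNr; lra.
Qed.

Lemma eqD : DD = r * (c * DD) + (p - r) * (- c * M1 + c * M2 + (t2 - t1))
   + (q - r) * (c * M1 - c * M2 + (t2 - t1)) + (1 - p - q + r) * (c * DD).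
Proof.
have b1 : forall z, K z -> 0 <= `|z.1 - z.2| <= 1.
  move=> z /Kb [? ? ? ?]; rewrite normr_ge0 /=.
  by rewrite ler_norml; apply/andP; split; lra.
have e := @KLR _ 1 mDD b1.
by rewrite /= !RId RI12 RI21 in e.
Qed.


Lemma final : (\int[gamma]_(z in K) (`|z.1 - z.2|)%:E)%E =
    ((t2 - t1) / (1 - c) *
     ((c * (p - q) ^+ 2 + (1 - c) * (p + q - 2 * r))
      / ((1 - c) + c * (p + q - 2 * r))))%:E.
Proof.
rewrite (RIE _ (@intK _ 1 mDD _)); last first.
  move=> z /Kb [? ? ? ?]; rewrite normr_id ler_norml; apply/andP; split; lra.
congr EFin; rewrite -/DD.
have [w1 w2 w3 w4] := wpos.
have hc1 : 1 - c != 0 by apply: lt0r_neq0; move: c1; lra.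
have hden : (1 - c) + c * (p + q - 2 * r) != 0.
  apply: lt0r_neq0; have : 0 < c * (p + q - 2 * r) by rewrite mulr_gt0 //; lra.
  move: c1; lra.
have h1 : (1 - c) * M1 = p * t1 + (1 - p) * t2 by have := eqM1; lra.
have h2 : (1 - c) * M2 = q * t1 + (1 - q) * t2 by have := eqM2; lra.
have hm : (1 - c) * (M1 - M2) = (q - p) * (t2 - t1) by move: h1 h2; lra.
have hd : DD * ((1 - c) + c * (p + q - 2 * r)) =
   (t2 - t1) * (p + q - 2 * r) + c * (q - p) * (M1 - M2) by have := eqD; lra.
have eM : M1 - M2 = (q - p) * (t2 - t1) / (1 - c).
  by apply: (mulfI hc1); rewrite hm; field.
have eD : DD = ((t2 - t1) * (p + q - 2 * r) + c * (q - p) * (M1 - M2)) / ((1 - c) + c * (p + q - 2 * r)).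
  by rewrite -hd mulfK.
by rewrite eD eM; field; rewrite hden hc1.
Qed.

End Geo.

Theorem theorem2p1 (R : realType) (c t1 t2 p q r : R) (F : set R)
  (gamma : probability (R * R)%type R) :
  0 < c -> c <= 1 / 2 ->
  0 <= t1 -> t1 <= 1 - 2 * c ->
  t1 + c <= t2 -> t2 <= 1 - c ->
  0 < p -> p < 1 -> 0 < q -> q < 1 -> p != q ->
  compact F -> F !=set0 ->
  F = simil c t1 @` F `|` simil c t2 @` F ->
  Num.max 0 (p + q - 1) < r -> r < Num.min p q ->
  coupling_selfsim gamma c t1 t2 p q r ->
  (\int[gamma]_(z in F `*` F) (`|z.1 - z.2|)%:E)%E =
    ((t2 - t1) / (1 - c) *
     ((c * (p - q) ^+ 2 + (1 - c) * (p + q - 2 * r))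
      / ((1 - c) + c * (p + q - 2 * r))))%:E.
Proof.
intros; eapply final; eassumption.
Qed.
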